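(* For all natural numbers $n,b\ge1$, $$s\big(2n^2b^2+2nb+1,\,2nb^2\big)=\frac{2n^2b^2-3nb^2+1}{12nb^2}.$$
   Context: For an integer $q\neq0$ and an integer $p$ (or residue class of $p$ mod $q$), the Dedekind sum is $$s(p,q)=\sum_{i=1}^{|q|}\Big(\Big(\frac{i}{q}\Big)\Big)\Big(\Big(\frac{pi}{q}\Big)\Big),$$ where $((x))=0$ if $x\in\mathbb{Z}$ and $((x))=x-\lfloor x\rfloor-\tfrac12$ otherwise. *)

(* Defs.v *)
From mathcomp Require Import all_boot all_order all_algebra.
Set Implicit Arguments. Unset Strict Implicit. Unset Printing Implicit Defensive.
Import Order.TTheory GRing.Theory Num.Theory.
Local Open Scope ring_scope.

Definition sawtooth (x : rat) : rat :=
  if x \is a Num.int then 0 else x - (Num.floor x)%:~R - 1 / 2.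

Definition dedekind_sum (p q : int) : rat :=
  \sum_(1 <= i < `|q|%N.+1) sawtooth (i%:~R / q%:~R) * sawtooth ((p * i%:Z)%:~R / q%:~R).

(* Main.v *)
Require Import Defs.
From mathcomp Require Import all_boot all_order all_algebra.
From mathcomp Require Import ring lra zify.
Import Order.TTheory GRing.Theory Num.Theory.
Local Open Scope ring_scope.

Lemma sum_id N : \sum_(0 <= t < N) (t%:R : rat) = N%:R * (N%:R - 1) / 2.
Proof.
elim: N => [|N IH]; first by rewrite big_nil; field.
by rewrite big_nat_recr //= IH -addn1 natrD; field.
Qed.

Lemma sum_sq N : \sum_(0 <= t < N) (t%:R : rat) ^+ 2 = N%:R * (N%:R - 1) * (2 * N%:R - 1) / 6.
Proof.
elim: N => [|N IH]; first by rewrite big_nil; field.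
by rewrite big_nat_recr //= IH -addn1 natrD; field.
Qed.

Lemma sum_quad N (F : nat -> rat) A B C :
  (forall t, F t = A + B * t%:R + C * t%:R ^+ 2) ->
  \sum_(0 <= t < N) F t = A * N%:R + B * (N%:R * (N%:R - 1) / 2)
     + C * (N%:R * (N%:R - 1) * (2 * N%:R - 1) / 6).
Proof.
move=> HF; under eq_bigr => t _ do rewrite HF.
rewrite !big_split /=.
rewrite -!mulr_sumr sum_id sum_sq sumr_const_nat subn0 -mulr_natr; ring.
Qed.

Lemma sum_split A B (F : nat -> rat) :
  \sum_(0 <= i < A * B) F i = \sum_(0 <= v < B) \sum_(0 <= u < A) F (u + A * v)%N.
Proof.
elim: B => [|B IH]; first by rewrite muln0 !big_nil.
rewrite big_nat_recr //= -IH mulnS addnC (big_cat_nat _ (leq_addr _ _)) //=.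
congr (_ + _).
rewrite -{1}(add0n (A * B)%N) big_addn addKn.
by [].
Qed.

Lemma st_shift (X : int) (j Q : nat) : (0 < Q)%N -> (j < Q)%N ->
  sawtooth (X%:~R + j%:R / Q%:R) = if j == 0%N then 0 else j%:R / Q%:R - 1 / 2.
Proof.
move=> Q0 jQ.
have Qr : (0 : rat) < Q%:R by rewrite ltr0n.
have fl : Num.floor (j%:R / Q%:R : rat) = 0.
  apply: floor_def; rewrite add0r !rmorph0 rmorph1 divr_ge0 ?ler0n //=.
  by rewrite ltr_pdivrMr // mul1r ltr_nat.
have flX : Num.floor (X%:~R + j%:R / Q%:R : rat) = X.
  by rewrite addrC floorDrz ?intr_int // fl add0r intrKfloor.
rewrite /sawtooth intrEfloor flX.
case: (eqVneq j 0%N) => [->|jn0].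
  by rewrite mul0r addr0 eqxx.
have -> : (X%:~R == X%:~R + j%:R / Q%:R :> rat) = false.
  apply/negbTE; rewrite -subr_eq0 opprD addNKr oppr_eq0 mulf_neq0 //.
    by rewrite pnatr_eq0.
  by rewrite invr_eq0 pnatr_eq0 -lt0n.
by rewrite /=; ring.
Qed.
Lemma rot_split c b (G : nat -> nat -> rat) : (c < b)%N ->
  \sum_(0 <= v < b) G v ((c + v) %% b)%N =
  \sum_(0 <= v < b - c) G v (c + v)%N + \sum_(0 <= t < c) G (t + (b - c))%N t.
Proof.
move=> cb.
rewrite (big_cat_nat (n := b - c) (leq0n _) (leq_subr c b)) /=.
have E1 : \sum_(0 <= v < b - c) G v ((c + v) %% b)%N = \sum_(0 <= v < b - c) G v (c + v)%N.
  apply: eq_big_nat => v /andP [_ vb].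
  have vb' : (c + v < b)%N by rewrite -ltn_subRL.
  by rewrite (modn_small vb').
have E2 : \sum_(b - c <= v < b) G v ((c + v) %% b)%N = \sum_(0 <= t < c) G (t + (b - c))%N t.
  rewrite -{1}(add0n (b - c)%N) big_addn (subKn (ltnW cb)).
  apply: eq_big_nat => t /andP [_ tc].
  have -> : (c + (t + (b - c)) = t + b)%N.
    by rewrite addnCA (subnKC (ltnW cb)).
  by rewrite modnDr modn_small // (ltn_trans tc cb).
by rewrite E1 E2.
Qed.

Lemma rot_sum1 c b : (c < b)%N ->
  \sum_(0 <= v < b) (((c + v) %% b)%N%:R : rat) = b%:R * (b%:R - 1) / 2.
Proof.
move=> cb; rewrite (@rot_split c b (fun _ w => (w%:R : rat))) //.
rewrite (sum_quad _ _ (c%:R) (1) (0)); last by move=> t; rewrite natrD; ring.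
rewrite (sum_quad _ _ (0) (1) (0)); last by move=> t; ring.
by rewrite (natrB _ (ltnW cb)); field.
Qed.

Lemma rot_sum2 c b : (c < b)%N ->
  \sum_(0 <= v < b) (v%:R * ((c + v) %% b)%N%:R : rat) =
  b%:R * (b%:R - 1) * (2 * b%:R - 1) / 6 - b%:R * c%:R * (b%:R - c%:R) / 2.
Proof.
move=> cb; rewrite (@rot_split c b (fun v w => (v%:R * w%:R : rat))) //.
rewrite (sum_quad _ _ (0) (c%:R) (1)); last by move=> t; rewrite natrD; ring.
rewrite (sum_quad _ _ (0) ((b - c)%N%:R) (1)); last by move=> t; rewrite natrD; ring.
by rewrite (natrB _ (ltnW cb)); field.
Qed.

Lemma vsum c b (y m : rat) : (c < b)%N ->
  \sum_(0 <= v < b) ((y + m * v%:R) * (y + m * ((c + v) %% b)%N%:R)) =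
  b%:R * y ^+ 2 + y * m * (b%:R * (b%:R - 1)) +
  m ^+ 2 * (b%:R * (b%:R - 1) * (2 * b%:R - 1) / 6 - b%:R * c%:R * (b%:R - c%:R) / 2).
Proof.
move=> cb.
have E : forall v, (y + m * v%:R) * (y + m * ((c + v) %% b)%N%:R) =
  y ^+ 2 + (y * m) * v%:R + (y * m) * ((c + v) %% b)%N%:R
  + m ^+ 2 * (v%:R * ((c + v) %% b)%N%:R) by move=> v; ring.
under eq_bigr => v _ do rewrite E.
rewrite !big_split /= -!mulr_sumr rot_sum1 // rot_sum2 // sumr_const_nat subn0.
rewrite (sum_quad _ _ (0) (1) (0)); last by move=> t; ring.
by rewrite -mulr_natl; field.
Qed.
Theorem corollary2 (n b : nat) (hn : (1 <= n)%N) (hb : (1 <= b)%N) :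
  dedekind_sum (2 * n%:Z ^+ 2 * b%:Z ^+ 2 + 2 * n%:Z * b%:Z + 1) (2 * n%:Z * b%:Z ^+ 2)
  = (2 * n%:~R ^+ 2 * b%:~R ^+ 2 - 3 * n%:~R * b%:~R ^+ 2 + 1) / (12 * n%:~R * b%:~R ^+ 2 : rat).
Proof.
set N := (2 * n)%N. set m := (b * N)%N. set Q := (m * b)%N.
set P := (2 * n ^ 2 * b ^ 2 + 2 * n * b + 1)%N.
have EP : (2 * n%:Z ^+ 2 * b%:Z ^+ 2 + 2 * n%:Z * b%:Z + 1) = P%:Z.
  rewrite /P; lia.
have EQ : (2 * n%:Z * b%:Z ^+ 2) = Q%:Z.
  rewrite /Q /m /N; lia.
rewrite /dedekind_sum EP EQ /=.
under eq_bigr => i _ do rewrite -PoszM -!pmulrn.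
rewrite -!pmulrn.
have Qpos : (0 < Q)%N by rewrite /Q /m /N !muln_gt0 hn hb.
have Q0 : (Q%:R : rat) != 0 by rewrite pnatr_eq0 -lt0n.
have bQ : (b%:R : rat) != 0 by rewrite pnatr_eq0 -lt0n.
have nQ : (n%:R : rat) != 0 by rewrite pnatr_eq0 -lt0n.
have nnQ : (n%:R + n%:R : rat) != 0 by rewrite -natrD pnatr_eq0 addn_eq0 andbb -lt0n.
have st0 : forall j : nat, sawtooth (0%:~R + 0%:R / j%:R) = 0.
  by move=> j; rewrite /sawtooth mul0r addr0 intr_int.
pose G (i : nat) := sawtooth (i%:R / Q%:R) * sawtooth ((P * i)%N%:R / Q%:R).
pose H (i : nat) := G i + (i == 0)%N%:R / 4.
have E1 : \sum_(1 <= i < Q.+1) G i = \sum_(0 <= i < Q) H i - 1 / 4.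
  rewrite big_nat_recr //= (big_ltn Qpos).
  have -> : G Q = 0.
    by rewrite /G divff // /sawtooth rpred1 mul0r.
  have -> : H 0%N = 1 / 4.
    rewrite /H /G muln0 mul0r /sawtooth rpred0 /= mul0r add0r mul1r.
    done.
  have -> : \sum_(1 <= i < Q) H i = \sum_(1 <= i < Q) G i.
    by apply: eq_big_nat => i /andP [i1 _]; rewrite /H eqn0Ngt i1 /= mul0r addr0.
  ring.
rewrite E1.
pose T (c k v : nat) : rat := ((c + b * k)%N%:R - Q%:R / 2 + m%:R * v%:R) *
   ((c + b * k)%N%:R - Q%:R / 2 + m%:R * ((c + v) %% b)%N%:R) / Q%:R ^+ 2.
have E3 : \sum_(0 <= i < Q) H i =
   \sum_(0 <= v < b) \sum_(0 <= k < N) \sum_(0 <= c < b) T c k v.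
  rewrite (sum_split m b H).
  apply: eq_big_nat => v /andP [_ vb].
  rewrite (sum_split b N (fun u => H (u + m * v)%N)).
  apply: eq_big_nat => k /andP [_ kN].
  apply: eq_big_nat => c /andP [_ cb].
  set i := (c + b * k + m * v)%N.
  set w := ((c + v) %% b)%N. set d := ((c + v) %/ b)%N.
  have wb : (w < b)%N by rewrite /w ltn_pmod.
  set j := (c + b * k + m * w)%N.
  have iQ : (i < Q)%N by rewrite /i /Q /m /N; nia.
  have jQ : (j < Q)%N by rewrite /j /Q /m /N; nia.
  have Hd : (c + v = d * b + w)%N by rewrite /d /w -divn_eq.
  have Hc : (c%:R : rat) = d%:R * b%:R + w%:R - v%:R.
    by rewrite -natrM -natrD -Hd natrD addrK.
  have EPi : ((P * i)%N%:R / Q%:R : rat) = ((n * i + k + N * v + d)%N%:Z)%:~R + j%:R / Q%:R.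
    rewrite -pmulrn /i /j /P /Q /m /N !(natrD, natrM, natrX) Hc.
    by field; rewrite ?bQ ?nQ.
  have Ei : (i%:R / Q%:R : rat) = (0 : int)%:~R + i%:R / Q%:R by rewrite add0r.
  have ET : T c k v = (i%:R / Q%:R - 1 / 2) * (j%:R / Q%:R - 1 / 2).
    rewrite /T /i /j !(natrD, natrM).
    by field; rewrite ?bQ ?nQ ?nnQ.
  rewrite ET /H /G Ei EPi !st_shift //.
  case: (eqVneq i 0%N) => [i0 | in0].
    have I0 : (c + b * k + b * (2 * n) * v = 0)%N by [].
    have [c0 [k0 v0]] : c = 0%N /\ k = 0%N /\ v = 0%N by nia.
    have j0 : j = 0%N.
      by rewrite /j /w c0 k0 v0 mod0n !muln0.
    rewrite i0 j0 eqxx /= mul0r add0r.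
    by field.
  have jn0 : j != 0%N.
    apply/eqP => j0; move/eqP: in0; apply.
    have J0 : (c + b * k + b * (2 * n) * w = 0)%N by [].
    have [c0 [k0 w0]] : c = 0%N /\ k = 0%N /\ w = 0%N by nia.
    have v0 : v = 0%N by move: w0; rewrite /w c0 add0n modn_small.
    by rewrite /i c0 k0 v0 !muln0.
  rewrite (negbTE jn0) [(0:int)%:~R]/(0:rat) add0r /= mul0r addr0.
  done.
rewrite E3.
have E5 : \sum_(0 <= v < b) \sum_(0 <= k < N) \sum_(0 <= c < b) T c k v =
    \sum_(0 <= c < b) \sum_(0 <= k < N) \sum_(0 <= v < b) T c k v.
  rewrite exchange_big_nat.
  under eq_bigr => k _ do rewrite exchange_big_nat.
  by rewrite exchange_big_nat.
rewrite E5.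
have Q2 : (Q%:R : rat) != 0 by [].
have E6 : \sum_(0 <= c < b) \sum_(0 <= k < N) \sum_(0 <= v < b) T c k v =
    \sum_(0 <= c < b) (((b%:R * (c%:R - Q%:R / 2) ^+ 2 + (c%:R - Q%:R / 2) * (m%:R * (b%:R * (b%:R - 1))) + (m%:R ^+ 2 * ((b%:R * (b%:R - 1) * (2 * b%:R - 1) / 6) - b%:R * c%:R * (b%:R - c%:R) / 2))) / Q%:R ^+ 2) * N%:R + ((2 * b%:R ^+ 2 * (c%:R - Q%:R / 2) + b%:R * (m%:R * (b%:R * (b%:R - 1)))) / Q%:R ^+ 2) * (N%:R * (N%:R - 1) / 2) + (b%:R ^+ 3 / Q%:R ^+ 2) * (N%:R * (N%:R - 1) * (2 * N%:R - 1) / 6)).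
  apply: eq_big_nat => c /andP [_ cb].
  rewrite (sum_quad _ _ ((b%:R * (c%:R - Q%:R / 2) ^+ 2 + (c%:R - Q%:R / 2) * (m%:R * (b%:R * (b%:R - 1))) + (m%:R ^+ 2 * ((b%:R * (b%:R - 1) * (2 * b%:R - 1) / 6) - b%:R * c%:R * (b%:R - c%:R) / 2))) / Q%:R ^+ 2) ((2 * b%:R ^+ 2 * (c%:R - Q%:R / 2) + b%:R * (m%:R * (b%:R * (b%:R - 1)))) / Q%:R ^+ 2) (b%:R ^+ 3 / Q%:R ^+ 2)) //.
  move=> k; rewrite /T -mulr_suml vsum // !(natrD, natrM).
  by field; rewrite ?bQ ?nQ ?nnQ.
rewrite E6 (sum_quad _ _ ((N%:R * (b%:R * (Q%:R / 2) ^+ 2 - (Q%:R / 2) * (m%:R * (b%:R * (b%:R - 1))) + m%:R ^+ 2 * (b%:R * (b%:R - 1) * (2 * b%:R - 1) / 6)) + (- 2 * b%:R ^+ 2 * (Q%:R / 2) + b%:R * (m%:R * (b%:R * (b%:R - 1)))) * (N%:R * (N%:R - 1) / 2) + b%:R ^+ 3 * (N%:R * (N%:R - 1) * (2 * N%:R - 1) / 6)) / Q%:R ^+ 2) ((N%:R * (- 2 * b%:R * (Q%:R / 2) + (m%:R * (b%:R * (b%:R - 1))) - m%:R ^+ 2 * b%:R ^+ 2 / 2) + 2 * b%:R ^+ 2 * (N%:R * (N%:R - 1) / 2)) / Q%:R ^+ 2) (N%:R * (b%:R + m%:R ^+ 2 * b%:R / 2) / Q%:R ^+ 2)); last first.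
  by move=> c; field; rewrite ?bQ ?nQ ?nnQ.
rewrite /Q /m /N !natrM.
by field; rewrite ?bQ ?nQ ?nnQ.
Qed.
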